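(* Let $k\ge 2$ be an integer. For any positive integer $c$, \[ z_k(c)=\xi_k\sum_{t\in\mathbb{N}\cap[c^{1/k},\infty)}\frac{|\mu(t)|}{t^{2k}}\prod_{p\mid t}\frac{1}{1-\frac{2}{p^k}}, \qquad\text{where}\qquad \xi_k:=\prod_{p}\Bigl(1-(p^k-1)^{-2}\Bigr). \]
   Context: $\mu$ is the Möbius function, $\mu_{k+1}(q)$ is the indicator function of the $(k+1)$-free positive integers, and $p$ always denotes a prime (products over $p$ are over all primes, or over primes dividing the indicated integer). For $c\in\mathbb{N}$, \[ z_k(c):=\sum_{\substack{r\in\mathbb{N}\\ r\ge c}}\ \sum_{d\in\mathbb{N}}\mu(d)\,\mu_{k+1}(dr)\prod_{p\mid dr}\frac{1}{(p^k-1)^2}. \] *)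

(* Defs.v *)
From HB Require Import structures.
From mathcomp Require Import all_boot all_order all_algebra.
From mathcomp Require Import all_classical all_reals all_analysis.
Set Implicit Arguments. Unset Strict Implicit. Unset Printing Implicit Defensive.
Import Order.TTheory GRing.Theory Num.Theory numFieldNormedType.Exports.
Local Open Scope ring_scope.

Definition powfree (m n : nat) : bool :=
  (0 < n)%N && all (fun p => (logn p n < m)%N) (primes n).

(* squarefree indicator = |mu(n)| *)
Definition squarefree (n : nat) : bool := powfree 2 n.

(* Moebius function, with mu 0 = 0 (never used at 0). *)
Definition moebius (n : nat) : int :=
  if squarefree n then (-1) ^+ size (primes n) else 0.

Definition mu_free (R : nzRingType) (k q : nat) : R :=
  if powfree k.+1 q then 1 else 0.

Definition prod_pdiv (R : nzRingType) (n : nat) (f : nat -> R) : R :=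
  \prod_(p <- primes n) f p.

(* z_k(c) = sum_{r >= c} sum_{d >= 1} mu(d) mu_{k+1}(dr) prod_{p|dr} (p^k-1)^{-2},
   infinite sums as limits of partial sums (iterated). *)
Definition z_k (R : realType) (k c : nat) : R :=
  limn (fun M : nat => (\sum_(c <= r < M)
     limn (fun N : nat => (\sum_(1 <= d < N)
        ((moebius d)%:~R * mu_free R k (d * r)
         * prod_pdiv (d * r) (fun p => ((p%:R : R) ^+ k - 1)^-2)) : R)) : R)).

Definition xi_k (R : realType) (k : nat) : R :=
  limn (fun N : nat => (\prod_(0 <= p < N | prime p) (1 - ((p%:R : R) ^+ k - 1)^-2) : R)).

(* Main.v *)
Require Import Defs.
From HB Require Import structures.
From mathcomp Require Import all_boot all_order all_algebra.
From mathcomp Require Import all_classical all_reals all_analysis.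
From mathcomp Require Import ring lra zify.
Import Order.TTheory GRing.Theory Num.Theory numFieldNormedType.Exports.

Local Close Scope classical_set_scope.
Local Close Scope ring_scope.

Lemma prod_primes_gt0 (s : seq nat) : all prime s -> (0 < \prod_(p <- s) p)%N.
Proof.
move=> ps; rewrite big_seq; apply: prodn_cond_gt0 => i /(allP ps); exact: prime_gt0.
Qed.

Lemma logn_prod_primes (s : seq nat) q : uniq s -> all prime s ->
  logn q (\prod_(p <- s) p) = (q \in s).
Proof.
elim: s => [|p s IH] /=; first by rewrite big_nil logn1.
case/andP => ps us /andP[pp ps'].
rewrite big_cons lognM ?(prime_gt0 pp) ?prod_primes_gt0 // IH // logn_prime // inE.
by case: (q =P p) => [->|] //=; rewrite (negbTE ps).
Qed.

Lemma dvdn_log m n : (0 < m)%N -> (0 < n)%N -> (forall p, logn p m <= logn p n)%N -> (m %| n)%N.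
Proof.
move=> m0 n0 H; apply/gcdn_idPl; apply: eqn_from_log => //; first by rewrite gcdn_gt0 m0.
by move=> p; rewrite logn_gcd // (minn_idPl (H p)).
Qed.

Lemma sqfree_log d q : squarefree d -> logn q d = (q \in primes d).
Proof.
case/andP => d0 /allP H.
case: (boolP (q \in primes d)) => qd.
  by have := H _ qd; rewrite -logn_gt0 in qd; case: (logn q d) qd => [|[|]].
by apply/eqP; rewrite eqn0Ngt logn_gt0.
Qed.

Lemma sqfree_prod d : squarefree d -> d = \prod_(p <- primes d) p.
Proof.
move=> sd; have d0 : (0 < d)%N by case/andP: sd.
apply: eqn_from_log => //; first by rewrite prod_primes_gt0 // all_prime_primes.
by move=> q; rewrite logn_prod_primes ?primes_uniq ?all_prime_primes // sqfree_log.
Qed.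

Lemma prod_primes_sqfree (s : seq nat) : uniq s -> all prime s ->
  squarefree (\prod_(p <- s) p) /\ primes (\prod_(p <- s) p) =i s.
Proof.
move=> us ps; split.
  apply/andP; split; first exact: prod_primes_gt0.
  by apply/allP => q _; rewrite logn_prod_primes //; case: (q \in s).
by move=> q; rewrite -logn_gt0 logn_prod_primes //; case: (q \in s).
Qed.

Lemma divisorsM p m : prime p -> (0 < m)%N -> ~~ (p %| m)%N ->
  perm_eq (divisors (p * m)) (divisors m ++ map (muln p) (divisors m)).
Proof.
move=> pp m0 npm; have p0 := prime_gt0 pp.
apply: uniq_perm; first exact: divisors_uniq.
  rewrite cat_uniq divisors_uniq map_inj_uniq ?divisors_uniq; last by move=> x y /eqP; rewrite eqn_pmul2l // => /eqP.
  rewrite andbT /=; apply/hasPn => x /mapP[e em ->]; rewrite -dvdn_divisors //.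
  by apply/negP => /(dvdn_trans (dvdn_mulr e (dvdnn p))); rewrite (negbTE npm).
move=> d; rewrite mem_cat -!dvdn_divisors ?muln_gt0 ?p0 //; apply/idP/orP.
  move=> dpm; case: (boolP (p %| d)%N) => [/dvdnP[e de]|npd].
    right; apply/mapP; exists e; last by rewrite de mulnC.
    by rewrite -dvdn_divisors // -(dvdn_pmul2l p0) -(mulnC e) -de.
  by left; rewrite -(@Gauss_dvdr d p m) // coprime_sym prime_coprime.
by case => [dm | /mapP[e em ->]]; [exact: dvdn_mull | rewrite dvdn_pmul2l // dvdn_divisors].
Qed.

Local Open Scope ring_scope.
Lemma expand_prod (R : comNzRingType) (s : seq nat) (x : nat -> R) : uniq s -> all prime s ->
  \sum_(d <- divisors (\prod_(p <- s) p)%N) \prod_(q <- primes d) x q = \prod_(p <- s) (1 + x p).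
Proof.
elim: s => [|p s IH] /=; first by rewrite !big_nil big_seq1 big_nil.
case/andP => ps us /andP[pp ps'].
have M0 := @prod_primes_gt0 s ps'.
have npM : ~~ (dvdn p (\prod_(q <- s) q)%N).
  by apply/negP => /(dvdn_leq_log p M0); rewrite logn_prime // eqxx logn_prod_primes // (negbTE ps).
rewrite !big_cons (perm_big _ (@divisorsM p _ pp M0 npM)) big_cat big_map /= IH //.
rewrite mulrDl mul1r; congr (_ + _).
rewrite -IH // big_distrr /=; apply: eq_big_seq => e; rewrite -dvdn_divisors // => eM.
have e0 : (0 < e)%N by apply: dvdn_gt0 eM.
have npe : ~~ (p %| e)%N by apply: contra npM => /dvdn_trans; apply.
rewrite (perm_big (p :: primes e)) ?big_cons //.
apply: uniq_perm; first exact: primes_uniq.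
  by rewrite /= primes_uniq andbT mem_primes (negbTE npe) !andbF.
by move=> q; rewrite (primesM _ (prime_gt0 pp) e0) primes_prime // !inE.
Qed.

Local Close Scope classical_set_scope.
Local Close Scope ring_scope.

Lemma powfree_logP m n : (0 < m)%N ->
  reflect ((0 < n)%N /\ forall p, (logn p n < m)%N) (powfree m n).
Proof.
move=> m0; apply: (iffP andP) => [[n0 /allP H]|[n0 H]]; last first.
  by split => //; apply/allP => p _; apply: H.
split => // p; case: (boolP (p \in primes n)) => [/H //|].
by rewrite -logn_gt0 lt0n negbK => /eqP ->.
Qed.

Lemma sqfree_gt0 {d} : squarefree d -> (0 < d)%N.
Proof. by case/andP. Qed.

Lemma powfree_dr k d r : (0 < k)%N -> (0 < r)%N -> squarefree d ->
  powfree k.+1 (d * r) =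
  powfree k.+1 r && all (fun q => (q %| r) ==> (logn q r < k)) (primes d).
Proof.
move=> k0 r0 sd; have d0 := sqfree_gt0 sd.
have L q : logn q (d * r) = ((q \in primes d) + logn q r)%N.
  by rewrite lognM // sqfree_log.
apply/idP/idP.
  case/(powfree_logP _ _ (ltn0Sn k)) => _ H; apply/andP; split.
    apply/(powfree_logP _ _ (ltn0Sn k)); split => // q.
    by apply: leq_ltn_trans (H q); rewrite L leq_addl.
  apply/allP => q qd; apply/implyP => _; have := H q.
  by rewrite L qd add1n ltnS.
case/andP => /(powfree_logP _ _ (ltn0Sn k)) [_ H] /allP A.
apply/(powfree_logP _ _ (ltn0Sn k)); split; first by rewrite muln_gt0 d0.
move=> q; rewrite L; case: (boolP (q \in primes d)) => qd; last by rewrite add0n.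
have := A q qd; case: (boolP (q %| r)%N) => qr /=.
  by rewrite add1n ltnS.
move=> _; have -> : logn q r = 0%N.
  apply/eqP; rewrite eqn0Ngt logn_gt0 mem_primes (negbTE qr) !andbF //.
by rewrite addn0 ltnS; case: (q \in primes d) qd.
Qed.

Lemma primes_dr {d r} : (0 < d)%N -> (0 < r)%N ->
  perm_eq (primes (d * r)) (primes r ++ [seq q <- primes d | ~~ (q %| r)%N]).
Proof.
move=> d0 r0; apply: uniq_perm; first exact: primes_uniq.
  rewrite cat_uniq primes_uniq filter_uniq ?primes_uniq // andbT /=.
  apply/hasPn => q; rewrite mem_filter => /andP[qr _].
  by rewrite mem_primes (negbTE qr) !andbF.
move=> q; rewrite primesM // mem_cat mem_filter.
case: (boolP (q \in primes r)) => qr; first by rewrite orbT.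
rewrite orbF /=; case: (boolP (q \in primes d)) => qd; rewrite ?andbF ?andbT //.
move: qr qd; rewrite !mem_primes r0 d0 /= => qr /andP[pq _].
by rewrite pq /= in qr.
Qed.

Local Open Scope ring_scope.

Definition gk (R : realType) (k p : nat) : R := ((p%:R : R) ^+ k - 1)^-2.
Definition Gk (R : realType) (k n : nat) : R := prod_pdiv n (gk R k).
Definition ad (R : realType) (k r d : nat) : R :=
  (moebius d)%:~R * mu_free R k (d * r) * Gk R k (d * r).
Definition xr (R : realType) (k r q : nat) : R :=
  if (q %| r)%N then (if (logn q r < k)%N then -1 else 0) else - gk R k q.

Lemma prodN_seq (R : comNzRingType) (s : seq nat) (f : nat -> R) :
  \prod_(q <- s) (- f q) = (-1) ^+ size s * \prod_(q <- s) f q.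
Proof.
elim: s => [|q s IH]; first by rewrite !big_nil expr0 mul1r.
by rewrite !big_cons IH /= exprS; ring.
Qed.

Lemma prod_ifb (R : comNzRingType) (s : seq nat) (P b : pred nat) (f : nat -> R) :
  \prod_(q <- s) (if P q then (b q)%:R else f q) =
  (all (fun q => P q ==> b q) s)%:R * \prod_(q <- s | ~~ P q) f q.
Proof.
elim: s => [|q s IH]; first by rewrite !big_nil mul1r.
rewrite !big_cons IH /=; case: (P q) => /=; last by ring.
by case: (b q) => /=; ring.
Qed.

Lemma U1 (R : realType) k r d : (0 < k)%N -> (0 < r)%N -> squarefree d ->
  ad R k r d = mu_free R k r * Gk R k r * \prod_(q <- primes d) xr R k r q.
Proof.
move=> k0 r0 sd; have d0 := sqfree_gt0 sd.
rewrite /ad /moebius sd rmorphXn rmorphN1 /=.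
rewrite /mu_free powfree_dr //.
rewrite /Gk /prod_pdiv (perm_big _ (primes_dr d0 r0)) big_cat /= big_filter.
have -> : \prod_(q <- primes d) xr R k r q =
    \prod_(q <- primes d) - (if (q %| r)%N then ((logn q r < k)%N)%:R else gk R k q).
  apply: eq_bigr => q _; rewrite /xr; case: (q %| r)%N => //; by case: (logn q r < k)%N; rewrite /= ?mulr1n ?oppr0.
rewrite (prodN_seq _ (primes d) (fun q => if (q %| r)%N then ((logn q r < k)%N)%:R else gk R k q)).
rewrite (prod_ifb _ _ (fun q => q %| r)%N (fun q => logn q r < k)%N).
case: (powfree k.+1 r); case: (all _ _) => /=; ring.
Qed.

Local Close Scope classical_set_scope.
Local Close Scope ring_scope.
Local Open Scope ring_scope.

Lemma pk_ge {k p : nat} : (2 <= k)%N -> prime p -> (p.+2 <= p ^ k)%N.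
Proof.
move=> hk pp; have p2 := prime_gt1 pp.
apply: (@leq_trans (p ^ 2)); last by rewrite leq_pexp2l // ltnW.
by rewrite -[p.+2]addn2 expnS expn1; nia.
Qed.

Lemma gk_facts (R : realType) {k p} : (2 <= k)%N -> prime p ->
  [/\ 0 < gk R k p, (p%:R ^+ 2 : R) * gk R k p <= 1 & gk R k p <= 1].
Proof.
move=> hk pp; have p2 := prime_gt1 pp.
have H := pk_ge hk pp.
have Hy : (p%:R : R) + 1 <= (p%:R : R) ^+ k - 1.
  rewrite -natrX lerBrDr -addrA (_ : (1:R) + 1 = 2%:R) // -natrD ler_nat; lia.
have p1 : (1 : R) <= p%:R by rewrite (ler_nat _ 1); lia.
have yp : 0 < (p%:R : R) ^+ k - 1 by lra.
rewrite /gk; split.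
- by rewrite invr_gt0 exprn_gt0.
- rewrite ler_pdivrMr ?exprn_gt0 // mul1r ler_pXn2r ?nnegrE //; lra.
- by rewrite invf_le1 ?exprn_gt0 //; apply: exprn_ege1; lra.
Qed.

Lemma gk_ge0 (R : realType) k p : (2 <= k)%N -> prime p -> 0 <= gk R k p.
Proof. by move=> hk pp; case: (gk_facts R hk pp) => /ltW. Qed.

Lemma gk_le1 (R : realType) k p : (2 <= k)%N -> prime p -> gk R k p <= 1.
Proof. by move=> hk pp; case: (gk_facts R hk pp). Qed.

Lemma Gk_bounds (R : realType) {k} n : (2 <= k)%N -> 0 <= Gk R k n <= 1.
Proof.
move=> hk; rewrite /Gk /prod_pdiv big_seq; apply/andP; split.
  by apply: prodr_ge0 => p; rewrite mem_primes => /andP[pp _]; apply: gk_ge0.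
apply: prodr_ile1 => p; rewrite mem_primes => /andP[pp _].
by rewrite gk_ge0 ?gk_le1.
Qed.

Lemma moebius_norm (R : realType) d : `|(moebius d)%:~R : R| <= 1.
Proof.
rewrite /moebius; case: (squarefree d); last by rewrite normr0.
by rewrite rmorphXn rmorphN1 normrX normrN normr1 expr1n.
Qed.

Lemma mu_free_norm (R : realType) k n : `|mu_free R k n| <= 1.
Proof. by rewrite /mu_free; case: (powfree _ _); rewrite ?normr1 ?normr0. Qed.

Lemma prod_dvd_r (s : seq nat) r : (0 < r)%N -> uniq s -> all prime s ->
  (forall q, q \in s -> q %| r)%N -> (\prod_(q <- s) q %| r)%N.
Proof.
move=> r0 us ps H; apply: dvdn_log => //; first exact: prod_primes_gt0.
move=> q; rewrite logn_prod_primes //; case: (boolP (q \in s)) => // qs.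
by rewrite logn_gt0 mem_primes r0 H // (allP ps).
Qed.

Lemma ad_bound (R : realType) k r d : (2 <= k)%N -> (0 < r)%N -> squarefree d ->
  `|ad R k r d| * (d%:R ^+ 2) <= r%:R ^+ 2.
Proof.
move=> hk r0 sd; have d0 := sqfree_gt0 sd.
set Pg := \prod_(q <- primes d | ~~ (q %| r)%N) gk R k q.
have Pg0 : 0 <= Pg.
  by rewrite /Pg big_seq_cond; apply: prodr_ge0 => q /andP[]; rewrite mem_primes => /andP[pp _] _; apply: gk_ge0.
have H1 : `|ad R k r d| <= Pg.
  rewrite /ad !normrM.
  have -> : Gk R k (d * r) = Gk R k r * Pg.
    by rewrite /Gk /prod_pdiv (perm_big _ (primes_dr d0 r0)) big_cat /= big_filter.
  case/andP: (Gk_bounds R r hk) => G0 G1.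
  rewrite [`|Gk R k r * Pg|]ger0_norm ?mulr_ge0 //.
  apply: (@le_trans _ _ (1 * 1 * (Gk R k r * Pg))).
    apply: ler_wpM2r; first by rewrite mulr_ge0.
    by apply: ler_pM => //; [exact: moebius_norm | exact: mu_free_norm].
  by rewrite !mul1r ler_piMl.
have Hd : d = (\prod_(q <- primes d | (q %| r)%N) q * \prod_(q <- primes d | ~~ (q %| r)%N) q)%N.
  by rewrite {1}(sqfree_prod _ sd) (bigID (fun q => (q %| r)%N)) /=.
have HD1 : (\prod_(q <- primes d | (q %| r)%N) q <= r)%N.
  apply: dvdn_leq => //; rewrite -big_filter; apply: prod_dvd_r => //.
  - by rewrite filter_uniq ?primes_uniq.
  - by rewrite all_filter; apply/allP => q qd; apply/implyP => _; move: qd; rewrite mem_primes => /andP[].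
  - by move=> q; rewrite mem_filter => /andP[].
have HD2 : (\prod_(q <- primes d | ~~ (q %| r)%N) q)%:R ^+ 2 * Pg <= (1 : R).
  rewrite natr_prod -prodrXl /Pg -big_split /= big_seq_cond.
  apply: prodr_ile1 => q /andP[]; rewrite mem_primes => /andP[pp _] _.
  have [h1 h2 _] := gk_facts R hk pp.
  by rewrite h2 andbT mulr_ge0 ?exprn_ge0 // ltW.
have -> : (d%:R : R) = (\prod_(q <- primes d | (q %| r)%N) q)%:R * (\prod_(q <- primes d | ~~ (q %| r)%N) q)%:R.
  by rewrite -natrM -Hd.
rewrite exprMn.
apply: (@le_trans _ _ (Pg * ((\prod_(q <- primes d | (q %| r)%N) q)%:R ^+ 2 *
          (\prod_(q <- primes d | ~~ (q %| r)%N) q)%:R ^+ 2))).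
  by rewrite ler_wpM2r // mulr_ge0 ?exprn_ge0.
set A := (\prod_(q <- primes d | (q %| r)%N) q)%:R : R.
set B := (\prod_(q <- primes d | ~~ (q %| r)%N) q)%:R : R.
have -> : Pg * (A ^+ 2 * B ^+ 2) = A ^+ 2 * (B ^+ 2 * Pg) by ring.
rewrite -[r%:R ^+ 2]mulr1; apply: ler_pM; rewrite ?exprn_ge0 ?mulr_ge0 //.
by rewrite ler_pXn2r ?nnegrE // ler_nat.
Qed.

Local Close Scope classical_set_scope.
Local Close Scope ring_scope.

Definition sN (N : nat) : seq nat := [seq p <- index_iota 0 N | prime p].
Definition PN (N : nat) : nat := (\prod_(p <- sN N) p)%N.

Lemma sN_uniq N : uniq (sN N).
Proof. by rewrite filter_uniq // iota_uniq. Qed.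

Lemma sN_prime N : all prime (sN N).
Proof. exact: filter_all. Qed.

Lemma PN_gt0 N : (0 < PN N)%N.
Proof. exact: prod_primes_gt0 (sN_prime N). Qed.

Lemma dvd_PN_sqfree {N d} : (d %| PN N)%N -> squarefree d.
Proof.
move=> dP; have d0 : (0 < d)%N by apply: dvdn_gt0 dP; exact: PN_gt0.
apply/andP; split => //; apply/allP => q _.
apply: (@leq_ltn_trans (logn q (PN N))); first exact: dvdn_leq_log (PN_gt0 N) dP.
by rewrite /PN logn_prod_primes ?sN_uniq ?sN_prime //; case: (q \in sN N).
Qed.

Lemma sqfree_dvd_PN {N d} : (d < N)%N -> squarefree d -> (d %| PN N)%N.
Proof.
move=> dN sd; have d0 := sqfree_gt0 sd.
apply: dvdn_log => //; first exact: PN_gt0.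
move=> q; rewrite sqfree_log // /PN logn_prod_primes ?sN_uniq ?sN_prime //.
case: (boolP (q \in primes d)) => //= qd.
rewrite /sN mem_filter mem_index_iota /=.
move: qd; rewrite mem_primes => /and3P[-> _ qd] /=.
by have -> : (q < N)%N by apply: leq_ltn_trans dN; exact: dvdn_leq d0 qd.
Qed.

Local Open Scope ring_scope.

Lemma seq_range_sum (R : realType) (s : seq nat) a b (F : nat -> R) : uniq s ->
  (forall x, x \in s -> (a <= x < b)%N) ->
  \sum_(a <= x < b | x \in s) F x = \sum_(x <- s) F x.
Proof.
move=> us H; rewrite -big_filter; apply: perm_big; apply: uniq_perm => //.
  by rewrite filter_uniq // iota_uniq.
move=> x; rewrite mem_filter mem_index_iota.
by case: (boolP (x \in s)) => // /H ->.
Qed.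

Lemma seq_range_le (R : realType) (s : seq nat) a b (F : nat -> R) : uniq s ->
  (forall x, x \in s -> (a <= x < b)%N) -> (forall x, 0 <= F x) ->
  \sum_(x <- s) F x <= \sum_(a <= x < b) F x.
Proof.
move=> us H F0; rewrite -(@seq_range_sum R s a b F us H) [X in _ <= X]big_mkcond /= big_mkcond /=.
by apply: ler_sum => x _; case: (x \in s).
Qed.

Lemma tail_bound (R : realType) N M : (2 <= N)%N ->
  \sum_(N <= d < M) ((d%:R : R) ^+ 2)^-1 <= (N.-1%:R)^-1.
Proof.
move=> N2.
suff H : forall m, (N <= m)%N -> \sum_(N <= d < m) ((d%:R : R) ^+ 2)^-1 <= (N.-1%:R)^-1 - (m.-1%:R)^-1.
  case: (leqP N M) => NM; last by rewrite big_geq ?(ltnW NM) // invr_ge0.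
  by apply: le_trans (H M NM) _; rewrite lerBlDr lerDl invr_ge0.
clear M; elim => [|M IH]; first by rewrite leqn0 => /eqP N0; rewrite N0 in N2.
rewrite leq_eqVlt => /orP[/eqP <-|NM]; first by rewrite big_geq // subrr.
rewrite big_nat_recr //=; apply: le_trans (lerD (IH NM) (lexx _)) _.
rewrite -addrA lerD2l.
have M1 : (1 <= M.-1)%N by lia.
have -> : (M%:R : R) = M.-1%:R + 1 by rewrite natr1; congr (_%:R); lia.
move: M1; rewrite -(ler_nat R) => M1.
set x := (M.-1)%:R : R.
have x0 : 0 < x by lra.
suff : ((x+1)^+2)^-1 <= x^-1 - (x+1)^-1 by lra.
have -> : x^-1 - (x+1)^-1 = (x * (x+1))^-1.
  by field; apply/andP; split; apply: lt0r_neq0; lra.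
rewrite lef_pV2 ?posrE ?exprn_gt0 ?mulr_gt0 //; try lra.
Qed.

Local Close Scope classical_set_scope.
Local Close Scope ring_scope.
Local Open Scope ring_scope.

Lemma ad_nsq (R : realType) k r d : ~~ squarefree d -> ad R k r d = 0.
Proof. by move=> nsd; rewrite /ad /moebius (negbTE nsd) !mul0r. Qed.

Lemma S1 (R : realType) k r N :
  \sum_(1 <= d < N) ad R k r d = \sum_(d <- divisors (PN N) | (d < N)%N) ad R k r d.
Proof.
rewrite -[RHS]big_filter.
have us : uniq [seq d <- divisors (PN N) | (d < N)%N] by rewrite filter_uniq ?divisors_uniq.
have H : forall x, x \in [seq d <- divisors (PN N) | (d < N)%N] -> (1 <= x < N)%N.
  move=> x; rewrite mem_filter -dvdn_divisors ?PN_gt0 // => /andP[xN xP].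
  by rewrite xN andbT; apply: dvdn_gt0 xP; exact: PN_gt0.
rewrite -(@seq_range_sum R _ 1 N (ad R k r) us H) [RHS]big_mkcond /=.
apply: eq_big_nat => d /andP[d1 dN].
rewrite mem_filter dN /= -dvdn_divisors ?PN_gt0 //.
case: (boolP (squarefree d)) => sd.
  by rewrite (sqfree_dvd_PN dN sd).
case: (boolP (d %| PN N)%N) => dP; last by rewrite ad_nsq.
by rewrite (dvd_PN_sqfree dP) in sd.
Qed.

Lemma S2 (R : realType) k r N : (0 < k)%N -> (0 < r)%N ->
  \sum_(d <- divisors (PN N)) ad R k r d =
  mu_free R k r * Gk R k r * \prod_(p <- sN N) (1 + xr R k r p).
Proof.
move=> k0 r0.
rewrite (eq_big_seq (fun d => mu_free R k r * Gk R k r * \prod_(q <- primes d) xr R k r q)).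
  by rewrite -big_distrr /= expand_prod ?sN_uniq ?sN_prime.
move=> d; rewrite -dvdn_divisors ?PN_gt0 // => dP.
by rewrite U1 // (dvd_PN_sqfree dP).
Qed.

Lemma S3 (R : realType) k r N : (2 <= k)%N -> (0 < r)%N -> (2 <= N)%N ->
  `|\sum_(d <- divisors (PN N) | ~~ (d < N)%N) ad R k r d| <= r%:R ^+ 2 * (N.-1%:R)^-1.
Proof.
move=> hk r0 N2.
apply: le_trans (ler_norm_sum _ _ _) _.
rewrite -big_filter.
set s := [seq d <- divisors (PN N) | ~~ (d < N)%N].
have us : uniq s by rewrite filter_uniq ?divisors_uniq.
have H : forall x, x \in s -> (N <= x < (PN N).+1)%N.
  move=> x; rewrite mem_filter -dvdn_divisors ?PN_gt0 // => /andP[xN xP].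
  by rewrite leqNgt xN /= ltnS; apply: dvdn_leq => //; exact: PN_gt0.
apply: (@le_trans _ _ (\sum_(d <- s) r%:R ^+ 2 * ((d%:R : R) ^+ 2)^-1)).
  rewrite big_seq [X in _ <= X]big_seq; apply: ler_sum => d ds.
  have dP : (d %| PN N)%N by move: ds; rewrite mem_filter -dvdn_divisors ?PN_gt0 // => /andP[].
  have sd := dvd_PN_sqfree dP; have d0 := sqfree_gt0 sd.
  have dR : 0 < (d%:R : R) ^+ 2 by rewrite exprn_gt0 // ltr0n.
  by rewrite ler_pdivlMr // ad_bound.
rewrite -big_distrr /=; apply: ler_wpM2l; first exact: exprn_ge0.
apply: le_trans (tail_bound R N (PN N).+1 N2).
by apply: seq_range_le => // x; rewrite invr_ge0 exprn_ge0.
Qed.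

Lemma DN_eq (R : realType) k r N : (0 < k)%N -> (0 < r)%N ->
  \sum_(1 <= d < N) ad R k r d =
  mu_free R k r * Gk R k r * \prod_(p <- sN N) (1 + xr R k r p)
  - \sum_(d <- divisors (PN N) | ~~ (d < N)%N) ad R k r d.
Proof.
move=> k0 r0; rewrite S1 -S2 //; rewrite [in RHS](bigID (fun d => (d < N)%N)) /=.
by rewrite addrK.
Qed.

Definition EN (R : realType) k N : R := \prod_(0 <= p < N | prime p) (1 - gk R k p).
Definition Cr (R : realType) k r : R := \prod_(p <- primes r) (1 - gk R k p).
Definition Qr (R : realType) k r : R := \prod_(p <- primes r) (1 + xr R k r p).

Lemma S4 (R : realType) k r N : (0 < r)%N -> (r < N)%N ->
  \prod_(p <- sN N) (1 + xr R k r p) * Cr R k r = Qr R k r * EN R k N.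
Proof.
move=> r0 rN.
have F : [seq p <- sN N | (p %| r)%N] = primes r.
  rewrite /sN -filter_predI -(filter_pi_of rN); apply: eq_filter => p /=.
  by rewrite mem_primes r0 andbC.
have E1 : EN R k N = \prod_(p <- sN N) (1 - gk R k p) by rewrite /EN /sN big_filter.
have Sp : forall F : nat -> R, \prod_(p <- sN N) F p =
    \prod_(p <- primes r) F p * \prod_(p <- sN N | ~~ (p %| r)%N) F p.
  by move=> G; rewrite (bigID (fun p => (p %| r)%N)) /= -big_filter F.
rewrite E1 /Cr /Qr !Sp.
have -> : \prod_(i <- sN N | ~~ (i %| r)%N) (1 + xr R k r i) =
          \prod_(i <- sN N | ~~ (i %| r)%N) (1 - gk R k i).
  by apply: eq_bigr => p /negbTE pr; rewrite /xr pr.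
ring.
Qed.

Local Close Scope classical_set_scope.
Local Close Scope ring_scope.
Local Open Scope classical_set_scope.
Local Open Scope ring_scope.

Lemma gk_lt1 (R : realType) k p : (2 <= k)%N -> prime p -> 0 < 1 - gk R k p.
Proof.
move=> hk pp; have [h1 h2 _] := gk_facts R hk pp.
have p2 : (2 : R) <= p%:R by rewrite (ler_nat _ 2); exact: prime_gt1.
have : 4 <= (p%:R : R) ^+ 2 by rewrite expr2; nra.
move=> h4; nra.
Qed.

Lemma EN_ge0 (R : realType) k N : (2 <= k)%N -> 0 <= EN R k N.
Proof. by move=> hk; apply: prodr_ge0 => p pp; apply: ltW; apply: gk_lt1. Qed.

Lemma EN_cvg (R : realType) k : (2 <= k)%N -> EN R k @ \oo --> xi_k R k.
Proof.
move=> hk.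
have dec : {homo EN R k : n m / (n <= m)%N >-> m <= n}.
  apply/nonincreasing_seqP => n; rewrite /EN big_mkcond big_nat_recr //= -big_mkcond /=.
  case: (boolP (prime n)) => pn; last by rewrite mulr1.
  rewrite ler_piMr ?EN_ge0 //; have [h1 _ _] := gk_facts R hk pn.
  by rewrite lerBlDr lerDl ltW.
have lb : has_lbound (range (EN R k)).
  by exists 0 => x [n _ <-]; apply: EN_ge0.
have cE : cvgn (EN R k) by apply: cvgP; exact: nonincreasing_cvgn dec lb.
exact: cE.
Qed.

Lemma cvg0_bound (R : realType) (u : nat -> R) (C : R) :
  (forall n, `|u n| <= C * harmonic n) -> u @ \oo --> 0.
Proof.
move=> H.
apply: (@squeeze_cvgr _ _ _ _ (fun n => - (C * harmonic n)) (fun n => C * harmonic n)).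
- by apply: nearW => n; rewrite -ler_norml.
- rewrite -oppr0 -(mulr0 C); apply: cvgN; apply: cvgMr; exact: cvg_harmonic.
- rewrite -(mulr0 C); apply: cvgMr; exact: cvg_harmonic.
Qed.

Lemma Cr_neq0 (R : realType) k r : (2 <= k)%N -> Cr R k r != 0.
Proof.
move=> hk; rewrite /Cr prodf_seq_neq0; apply/allP => p.
by rewrite mem_primes => /andP[pp _] /=; apply: lt0r_neq0; apply: gk_lt1.
Qed.

Lemma fz_cvg (R : realType) k r : (2 <= k)%N -> (0 < r)%N ->
  (fun N => \sum_(1 <= d < N) ad R k r d) @ \oo -->
  mu_free R k r * Gk R k r * Qr R k r / Cr R k r * xi_k R k.
Proof.
move=> hk r0; have k0 : (0 < k)%N by apply: leq_trans hk.
set K := mu_free R k r * Gk R k r * Qr R k r / Cr R k r.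
have C0 := @Cr_neq0 R k r hk.
rewrite -(cvg_shiftn r.+2).
have E : forall n, \sum_(1 <= d < n + r.+2) ad R k r d =
   K * EN R k (n + r.+2) - \sum_(d <- divisors (PN (n + r.+2)) | ~~ (d < n + r.+2)%N) ad R k r d.
  move=> n; rewrite DN_eq //; congr (_ - _).
  rewrite -[\prod_(p <- _) _](mulfK C0) S4 //; last by lia.
  by rewrite /K; field.
rewrite (_ : [sequence _]_n = (fun n => K * EN R k (n + r.+2) -
     \sum_(d <- divisors (PN (n + r.+2)) | ~~ (d < n + r.+2)%N) ad R k r d)); last first.
  by apply: funext => n; rewrite /= E.
rewrite -[K * xi_k R k]subr0; apply: cvgB.
  apply: cvgMr; move: (@EN_cvg R k hk); rewrite -(cvg_shiftn r.+2); exact.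
apply: (@cvg0_bound _ _ (r%:R ^+ 2)) => n.
apply: le_trans (@S3 R k r (n + r.+2) hk r0 _) _; first by lia.
rewrite ler_wpM2l ?exprn_ge0 // /harmonic /=.
rewrite lef_pV2 ?posrE ?ltr0n //; last by lia.
by rewrite ler_nat; lia.
Qed.

Local Close Scope classical_set_scope.
Local Close Scope ring_scope.

Lemma kpow_char {k t} : (0 < k)%N -> squarefree t ->
  powfree k.+1 (t ^ k) && all (fun p => logn p (t ^ k) == k) (primes (t ^ k)).
Proof.
move=> k0 st; have t0 := sqfree_gt0 st.
apply/andP; split.
  apply/(powfree_logP _ _ (ltn0Sn k)); split; first by rewrite expn_gt0 t0.
  by move=> p; rewrite lognX sqfree_log //; case: (p \in primes t); rewrite ?muln1 ?muln0.
apply/allP => p; rewrite primesX // => pt.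
by rewrite lognX sqfree_log // pt muln1.
Qed.

Lemma kpow_exists {k r} : (0 < k)%N -> (0 < r)%N ->
  powfree k.+1 r && all (fun p => logn p r == k) (primes r) ->
  exists t, [/\ squarefree t, r = t ^ k & primes t = primes r].
Proof.
move=> k0 r0 /andP[pf /allP A].
exists (\prod_(p <- primes r) p)%N.
have [sq pm] := prod_primes_sqfree _ (primes_uniq r) (all_prime_primes r).
split => //; last by apply/eq_primes.
apply: eqn_from_log => //; first by rewrite expn_gt0 prod_primes_gt0 ?all_prime_primes.
move=> q; rewrite lognX logn_prod_primes ?primes_uniq ?all_prime_primes //.
case: (boolP (q \in primes r)) => qr; first by rewrite muln1; apply/eqP; exact: A.
by rewrite muln0; apply/eqP; rewrite eqn0Ngt logn_gt0.
Qed.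

Local Open Scope ring_scope.

Definition hh (R : realType) (k t : nat) : R :=
  (if squarefree t then 1 else 0) / (t%:R) ^+ (2 * k) *
  prod_pdiv t (fun p => (1 - 2 / (p%:R ^+ k))^-1).

Definition VV (R : realType) k r : R := mu_free R k r * Gk R k r * Qr R k r / Cr R k r.

Lemma term_id (R : realType) k p : (2 <= k)%N -> prime p ->
  gk R k p / (1 - gk R k p) = ((p%:R : R) ^+ (2 * k))^-1 * (1 - 2 / (p%:R ^+ k))^-1.
Proof.
move=> hk pp; have H := pk_ge hk pp.
have y4 : (4 : R) <= (p%:R : R) ^+ k.
  rewrite -natrX (ler_nat _ 4); have := prime_gt1 pp; lia.
move: y4; rewrite mulnC exprM /gk; set y := (p%:R : R) ^+ k => y4.
have y1 : y - 1 != 0 by apply: lt0r_neq0; lra.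
have y0 : y != 0 by apply: lt0r_neq0; lra.
have e1 : 1 - ((y - 1) ^+ 2)^-1 = (y * (y - 2)) / (y - 1) ^+ 2.
  by field.
have e2 : 1 - 2 / y = (y - 2) / y by field.
have y2 : y - 2 != 0 by apply: lt0r_neq0; lra.
rewrite e1 e2; field.
by rewrite y2 y0 y1.
Qed.

Lemma VV_eq (R : realType) k r : (2 <= k)%N -> (0 < r)%N ->
  VV R k r = \sum_(1 <= t < r.+1 | r == (t ^ k)%N) hh R k t.
Proof.
move=> hk r0; have k0 : (0 < k)%N by apply: leq_trans hk.
case: (boolP (powfree k.+1 r && all (fun p => logn p r == k) (primes r))) => b.
  have [t0 [st0 rt0 pt0]] := kpow_exists k0 r0 b.
  have t00 := sqfree_gt0 st0.
  rewrite (eq_bigl (fun t => t == t0)); last by move=> t; rewrite rt0 eqn_exp2r // eq_sym.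
  rewrite -big_filter filter_pred1_uniq ?iota_uniq //; last first.
    by rewrite mem_index_iota t00 ltnS rt0 -{1}(expn1 t0) leq_pexp2l.
  rewrite big_seq1.
  case/andP: b => pf /allP A.
  have Q1 : Qr R k r = 1.
    rewrite /Qr big_seq big1 // => p pr; rewrite /xr.
    have -> : (p %| r)%N by move: pr; rewrite mem_primes => /and3P[].
    by rewrite (eqP (A p pr)) ltnn addr0.
  rewrite /VV Q1 /mu_free pf mul1r mulr1 /Cr /Gk /prod_pdiv -prodf_div.
  rewrite /hh st0 /prod_pdiv pt0 {1}(sqfree_prod _ st0) pt0 natr_prod -prodrXl -prodfV mul1r.
  rewrite -big_split /= big_seq [RHS]big_seq; apply: eq_bigr => p.
  rewrite mem_primes => /andP[pp _]; exact: term_id.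
rewrite big1; last first.
  move=> t /eqP rt; rewrite /hh; case: (boolP (squarefree t)) => st; last by rewrite !mul0r.
  by rewrite rt kpow_char in b.
rewrite /VV; move: b; rewrite negb_and; case: (boolP (powfree k.+1 r)) => pf /=.
  case/allPn => p pr nk.
  have Q0 : Qr R k r = 0.
    apply/eqP; rewrite /Qr prodf_seq_eq0; apply/hasP; exists p => //=; rewrite /xr.
    have -> : (p %| r)%N by move: pr; rewrite mem_primes => /and3P[].
    move/(powfree_logP _ _ (ltn0Sn k)): pf => [_ /(_ p)].
    rewrite ltnS leq_eqVlt (negbTE nk) /= => ->.
    by rewrite subrr.
  by rewrite Q0 mulr0 mul0r.
by rewrite /mu_free (negbTE pf) !mul0r.
Qed.

Local Close Scope classical_set_scope.
Local Close Scope ring_scope.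
Local Open Scope classical_set_scope.
Local Open Scope ring_scope.

Definition ff (R : realType) k p : R := ((p%:R : R) ^+ (2 * k))^-1 * (1 - 2 / (p%:R ^+ k))^-1.

Lemma ff_bounds (R : realType) {k p} : (2 <= k)%N -> prime p ->
  0 <= ff R k p <= ((p%:R : R) ^+ 2)^-1.
Proof.
move=> hk pp; have H := pk_ge hk pp.
have p2 : (2 : R) <= p%:R by rewrite (ler_nat _ 2); exact: prime_gt1.
have yp : (p%:R : R) ^+ 2 <= (p%:R : R) ^+ k.
  by rewrite ler_eXn2l // ?(lt_le_trans _ p2) //; lra.
have y4 : (4 : R) <= (p%:R : R) ^+ k.
  rewrite -natrX (ler_nat _ 4); have := prime_gt1 pp; lia.
rewrite /ff mulnC exprM; move: yp y4; set y := (p%:R : R) ^+ k => yp y4.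
have -> : (y ^+ 2)^-1 * (1 - 2 / y)^-1 = (y * (y - 2))^-1.
  field; apply/andP; split; apply: lt0r_neq0; lra.
have q0 : 0 < (p%:R : R) ^+ 2 by rewrite exprn_gt0 //; lra.
apply/andP; split; first by rewrite invr_ge0; apply: mulr_ge0; lra.
rewrite lef_pV2 ?posrE //; last by apply: mulr_gt0; lra.
nra.
Qed.

Lemma hh_prod (R : realType) k t : squarefree t ->
  hh R k t = \prod_(p <- primes t) ff R k p.
Proof.
move=> st; rewrite /hh st /prod_pdiv {1}(sqfree_prod _ st) natr_prod -prodrXl -prodfV mul1r.
by rewrite -big_split.
Qed.

Lemma hh_bounds (R : realType) {k t} : (2 <= k)%N -> (0 < t)%N ->
  0 <= hh R k t <= ((t%:R : R) ^+ 2)^-1.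
Proof.
move=> hk t0; case: (boolP (squarefree t)) => st; last first.
  by rewrite /hh (negbTE st) !mul0r lexx invr_ge0 exprn_ge0.
have -> : ((t%:R : R) ^+ 2)^-1 = \prod_(p <- primes t) ((p%:R : R) ^+ 2)^-1.
  by rewrite {1}(sqfree_prod _ st) natr_prod -prodrXl prodfV.
rewrite hh_prod //.
apply/andP; split.
  by rewrite big_seq; apply: prodr_ge0 => p; rewrite mem_primes => /andP[pp _]; case/andP: (ff_bounds R hk pp).
rewrite big_seq [X in _ <= X]big_seq.
apply: ler_prod => p; rewrite mem_primes => /andP[pp _]; exact: ff_bounds.
Qed.

Lemma hh_ge0 (R : realType) k t : (2 <= k)%N -> 0 <= hh R k t.
Proof.
move=> hk; case: t => [|t]; first by rewrite /hh /squarefree /powfree /= !mul0r.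
by case/andP: (hh_bounds R hk (ltn0Sn t)).
Qed.

Lemma sum_ind (R : realType) m n a (x : R) :
  \sum_(m <= i < n) (if i == a then x else 0) = if (m <= a < n)%N then x else 0.
Proof.
rewrite -big_mkcond -big_filter /=.
case: (boolP (a \in index_iota m n)) => ai.
  by rewrite filter_pred1_uniq ?iota_uniq // big_seq1 -mem_index_iota ai.
rewrite -mem_index_iota (negbTE ai) big_filter big1_seq // => i /andP[/eqP -> ai2].
by rewrite ai2 in ai.

Qed.

Local Close Scope classical_set_scope.
Local Close Scope ring_scope.
Local Open Scope classical_set_scope.
Local Open Scope ring_scope.

Definition AA (R : realType) k c M : R :=
  \sum_(1 <= t < M) (if (c <= t ^ k < M)%N then hh R k t else 0).
Definition BB (R : realType) k c T : R :=
  \sum_(1 <= t < T) (if (c <= t ^ k)%N then hh R k t else 0).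

Lemma t_le_tk t k : (0 < k)%N -> (t <= t ^ k)%N.
Proof.
move=> k0; case: t => [|t]; first by [].
by rewrite -{1}(expn1 t.+1) leq_pexp2l.
Qed.

Lemma outer_eq (R : realType) k c M : (2 <= k)%N -> (0 < c)%N ->
  \sum_(c <= r < M) VV R k r = AA R k c M.
Proof.
move=> hk c0; have k0 : (0 < k)%N by apply: leq_trans hk.
rewrite (@eq_big_nat _ _ _ _ _ _ (fun r => \sum_(1 <= t < M) (if r == (t ^ k)%N then hh R k t else 0))); last first.
  move=> r /andP[cr rM]; rewrite VV_eq //; last by apply: leq_trans cr.
  rewrite (big_nat_widen _ _ _ _ _ rM) [RHS]big_mkcond /= [LHS]big_mkcond /=.
  apply: eq_bigr => t _; case: (boolP (r == (t ^ k)%N)) => //= /eqP rt.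
  by rewrite ltnS rt t_le_tk.
rewrite exchange_big_nat /=; apply: eq_bigr => t _.
by rewrite sum_ind.
Qed.

Lemma sum_mono_range (R : realType) m n n' (F : nat -> R) : (n <= n')%N ->
  (forall i, 0 <= F i) -> \sum_(m <= i < n) F i <= \sum_(m <= i < n') F i.
Proof.
move=> nn F0; case: (leqP m n) => mn.
  by rewrite [X in _ <= X](@big_cat_nat _ _ _ n m n' _ _ mn nn) /= lerDl sumr_ge0.
by rewrite big_geq ?(ltnW mn) // sumr_ge0.
Qed.

Lemma AA_ndec (R : realType) k c : (2 <= k)%N -> forall M, AA R k c M <= AA R k c M.+1.
Proof.
move=> hk M; apply: (@le_trans _ _ (\sum_(1 <= t < M) (if (c <= t ^ k < M.+1)%N then hh R k t else 0))).
  apply: ler_sum_nat => t _; case: (boolP (c <= t ^ k < M)%N) => [/andP[-> /ltnW tM]|_].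
    by rewrite ltnS tM.
  by case: (_ && _); rewrite ?hh_ge0.
apply: sum_mono_range => // t; case: (_ && _); rewrite ?hh_ge0 //.
Qed.

Lemma BB_ndec (R : realType) k c : (2 <= k)%N -> forall T, BB R k c T <= BB R k c T.+1.
Proof.
move=> hk T; apply: sum_mono_range => // t; case: (_ <= _)%N; rewrite ?hh_ge0 //.
Qed.

Lemma AA_le_BB (R : realType) k c M : (2 <= k)%N -> AA R k c M <= BB R k c M.
Proof.
move=> hk; apply: ler_sum_nat => t _; case: (boolP (c <= t ^ k)%N) => ct /=.
  by case: (_ < _)%N; rewrite ?hh_ge0.
by [].
Qed.

Lemma BB_le2 (R : realType) k c T : (2 <= k)%N -> BB R k c T <= 2.
Proof.
move=> hk; apply: (@le_trans _ _ (\sum_(1 <= t < T) ((t%:R : R) ^+ 2)^-1)).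
  apply: ler_sum_nat => t /andP[t1 _]; case: (_ <= _)%N.
    by case/andP: (hh_bounds R hk t1).
  by rewrite invr_ge0 exprn_ge0.
case: (leqP T 1) => T1; first by rewrite big_geq.
rewrite big_ltn // expr1n invr1.
have := tail_bound R 2 T (leqnn 2); rewrite /= invr1.
move=> h; rewrite (_ : 2 = 1 + 1) //; lra.
Qed.

Lemma BB_le_AA (R : realType) k c T : (2 <= k)%N -> BB R k c T <= AA R k c (T ^ k).
Proof.
move=> hk; have k0 : (0 < k)%N by apply: leq_trans hk.
apply: (@le_trans _ _ (\sum_(1 <= t < T) (if (c <= t ^ k < T ^ k)%N then hh R k t else 0))).
  apply: ler_sum_nat => t /andP[_ tT]; rewrite ltn_exp2r // tT andbT lexx //.
apply: sum_mono_range; first exact: t_le_tk.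
by move=> t; case: (_ && _); rewrite ?hh_ge0.
Qed.

Lemma powR_cond (R : realType) k c t : (0 < k)%N -> (0 < c)%N ->
  ((c%:R : R) `^ (k%:R)^-1 <= t%:R) = (c <= t ^ k)%N.
Proof.
move=> k0 c0; set x := (c%:R : R) `^ (k%:R)^-1.
have x0 : 0 <= x by apply: powR_ge0.
have xk : x ^+ k = c%:R.
  rewrite -powR_mulrn // /x -powRrM mulVf ?powRr1 ?ler0n //.
  by rewrite pnatr_eq0 -lt0n.
by rewrite -(ler_pXn2r k0) ?nnegrE ?ler0n // xk -natrX ler_nat.
Qed.

Lemma fz_val (R : realType) k r : (2 <= k)%N -> (0 < r)%N ->
  limn (fun N : nat => (\sum_(1 <= d < N)
        ((moebius d)%:~R * mu_free R k (d * r)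
         * prod_pdiv (d * r) (fun p => ((p%:R : R) ^+ k - 1)^-2)) : R)) = xi_k R k * VV R k r.
Proof.
move=> hk r0; apply: cvg_lim; first exact: Rhausdorff.
rewrite mulrC; exact: (@fz_cvg R k r hk r0).
Qed.

Local Close Scope classical_set_scope.

Theorem lemma2p3 (R : realType) (k c : nat) (hk : (2 <= k)%N) (hc : (0 < c)%N) :
  z_k R k c =
  xi_k R k *
  limn (fun T : nat => (\sum_(1 <= t < T)
     (if (c%:R `^ (k%:R)^-1 <= (t%:R : R)) then
        (if squarefree t then 1 else 0) / (t%:R) ^+ (2 * k)
        * prod_pdiv t (fun p => (1 - 2 / (p%:R ^+ k))^-1)
      else 0) : R)).
Proof.
have k0 : (0 < k)%N by apply: leq_trans hk.
have E1 : (fun T : nat => (\sum_(1 <= t < T)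
     (if (c%:R `^ (k%:R)^-1 <= (t%:R : R)) then
        (if squarefree t then 1 else 0) / (t%:R) ^+ (2 * k)
        * prod_pdiv t (fun p => (1 - 2 / (p%:R ^+ k))^-1)
      else 0) : R)) = BB R k c.
  apply: funext => T; apply: eq_bigr => t _; by rewrite powR_cond.
have E2 : (fun M : nat => (\sum_(c <= r < M)
     limn (fun N : nat => (\sum_(1 <= d < N)
        ((moebius d)%:~R * mu_free R k (d * r)
         * prod_pdiv (d * r) (fun p => ((p%:R : R) ^+ k - 1)^-2)) : R)) : R))
   = (fun M => xi_k R k * AA R k c M).
  apply: funext => M; rewrite -outer_eq // big_distrr /=.
  apply: eq_big_nat => r /andP[cr _]; apply: fz_val => //; exact: leq_trans cr.
rewrite E1 /z_k E2.
have bA : has_ubound (range (AA R k c)).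
  by exists 2 => x [M _ <-]; apply: le_trans (AA_le_BB R k c M hk) (BB_le2 R k c M hk).
have bB : has_ubound (range (BB R k c)).
  by exists 2 => x [M _ <-]; apply: BB_le2.
have iA : {homo AA R k c : n m / (n <= m)%N >-> n <= m}.
  by apply/nondecreasing_seqP; exact: AA_ndec.
have iB : {homo BB R k c : n m / (n <= m)%N >-> n <= m}.
  by apply/nondecreasing_seqP; exact: BB_ndec.
have cA : cvgn (AA R k c) by apply: cvgP; exact: nondecreasing_cvgn iA bA.
have cB : cvgn (BB R k c) by apply: cvgP; exact: nondecreasing_cvgn iB bB.
have eAB : limn (AA R k c) = limn (BB R k c).
  apply/eqP; rewrite eq_le; apply/andP; split.
    by apply: ler_lim => //; apply: nearW => M; apply: AA_le_BB.
  apply: limr_le => //; apply: nearW => T.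
  apply: le_trans (BB_le_AA R k c T hk) _; exact: nondecreasing_cvgn_le.
rewrite -eAB; apply: cvg_lim; first exact: Rhausdorff.
by apply: cvgMr; exact: cA.
Qed.
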